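(* For $n\ge 3$, the cycle $C_n$ satisfies $\nu_*(C_n)=6n-4$.
   Context: For a finite simple graph $G=(V,E)$ with $\ell=|V|+|E|$, a construction sequence (c-sequence) is a bijection $x:\{1,\dots,\ell\}\to V\sqcup E$ such that every edge $e=uw$ satisfies $x^{-1}(e)>\max\{x^{-1}(u),x^{-1}(w)\}$. The cost of $x$ is $\nu(x)=\sum_{e=uw\in E}\big(2x^{-1}(e)-x^{-1}(u)-x^{-1}(w)\big)$, and $\nu_*(G)$ is the minimum of $\nu(x)$ over all c-sequences for $G$. $C_n$ is the cycle on $n$ vertices. *)

(* Defs.v *)
From mathcomp Require Import all_boot.
Set Implicit Arguments. Unset Strict Implicit. Unset Printing Implicit Defensive.

Section CSeq.
Variables (V : finType) (adj : rel V).

Definition is_edge (A : {set V}) : bool :=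
  [exists u, exists w, adj u w && (A == [set u; w])].

Definition edge := {A : {set V} | is_edge A}.

Definition elt := (V + edge)%type.

Definition len : nat := #|{: V}| + #|{: edge}|.

(* 1-based position x^{-1}(t) of t under a map x : {1..ℓ} -> V ⊔ E
   (positions are encoded as 'I_len, position i meaning i+1). *)
Definition pos (x : 'I_len -> elt) (t : elt) : nat :=
  if [pick i | x i == t] is Some i then (val i).+1 else 0.

Definition cseq (x : 'I_len -> elt) : Prop :=
  bijective x /\
  forall (e : edge) (u : V), u \in val e -> pos x (inl u) < pos x (inr e).

Definition cost (x : 'I_len -> elt) : nat :=
  \sum_(e : edge) \sum_(u in val e) (pos x (inr e) - pos x (inl u)).

Definition is_nu_star (m : nat) : Prop :=
  (exists x, cseq x /\ cost x = m) /\ (forall x, cseq x -> m <= cost x).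

End CSeq.

Definition cycle_adj (n : nat) : rel 'I_n :=
  fun i j => (val j == (val i).+1 %% n) || (val i == (val j).+1 %% n).

(* Main.v *)
Require Import Defs.
From mathcomp Require Import all_boot zify.
Set Implicit Arguments. Unset Strict Implicit. Unset Printing Implicit Defensive.

Section Cyc.
Variable n : nat.
Hypothesis n3 : 2 < n.

Notation V := 'I_n.
Notation E := (@edge 'I_n (@cycle_adj n)).
Notation elt := (@elt 'I_n (@cycle_adj n)).

Lemma ordS_val (k : V) : nat_of_ord (ordS k) = k.+1 %% n.
Proof. by []. Qed.

Lemma ordS_neq (k : V) : k != ordS k.
Proof.
apply/eqP => /(congr1 (@nat_of_ord n)); rewrite ordS_val => H.
have := ltn_ord k; case: (ltngtP k.+1 n) => h1 h2 //.
- by move: H; rewrite modn_small //; lia.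
- by move: H; rewrite h1 modnn; lia.
Qed.

Lemma edge_of_proof (k : V) : is_edge (@cycle_adj n) [set k; ordS k].
Proof.
apply/existsP; exists k; apply/existsP; exists (ordS k).
by rewrite /cycle_adj eqxx andbT; apply/orP; left; apply/eqP; exact: ordS_val.
Qed.

Definition edge_of (k : V) : E := @exist {set V} (fun A => is_edge (@cycle_adj n) A) _ (edge_of_proof k).

Lemma edge_of_inj : injective edge_of.
Proof.
move=> a b /(congr1 val) /= H.
have : a \in [set b; ordS b] by rewrite -H setU11.
rewrite !inE => /orP [/eqP // | /eqP Ha].
have : ordS a \in [set b; ordS b] by rewrite -H !inE eqxx orbT.
rewrite !inE => /orP [/eqP Hb | /eqP Hb].
- exfalso. move: Ha Hb => /(congr1 (@nat_of_ord n)) Ha /(congr1 (@nat_of_ord n)) Hb.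
  rewrite !ordS_val in Ha Hb.
  have := ltn_ord a; have := ltn_ord b.
  have h2 : a.+1 %% n = a.+1 \/ (a.+1 = n /\ a.+1 %% n = 0).
    case: (ltngtP a.+1 n) => h; [left; exact: modn_small | lia | right; split => //; rewrite h modnn //].
  have h3 : b.+1 %% n = b.+1 \/ (b.+1 = n /\ b.+1 %% n = 0).
    case: (ltngtP b.+1 n) => h; [left; exact: modn_small | have:=ltn_ord b; lia | right; split => //; rewrite h modnn //].
  lia.
- by move: (ordS_inj Hb).
Qed.

Lemma edge_of_surj (e : E) : exists k, e = edge_of k.
Proof.
case: e => A HA; have := HA; case/existsP => u /existsP [w /andP [Huw /eqP HA']].
move: Huw; rewrite /cycle_adj => /orP [] /eqP h.
- exists u; apply: val_inj => /=; rewrite HA'; congr [set _; _]; apply: val_inj; by rewrite h.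
- exists w; apply: val_inj => /=; rewrite HA' setUC; congr [set _; _]; apply: val_inj; by rewrite h.
Qed.

Definition k0 : V := Ordinal (ltn_trans (isT : 0 < 2) n3).

Definition edge_inv (e : E) : V := odflt k0 [pick k | edge_of k == e].

Lemma edge_invK : cancel edge_inv edge_of.
Proof.
move=> e; rewrite /edge_inv; case: pickP => [k /eqP // | H].
by case: (edge_of_surj e) => k hk; move: (H k); rewrite hk eqxx.
Qed.

Lemma edge_ofK : cancel edge_of edge_inv.
Proof. by move=> k; apply: edge_of_inj; rewrite edge_invK. Qed.

Lemma edge_of_bij : bijective edge_of.
Proof. exact: Bijective edge_ofK edge_invK. Qed.

Lemma card_E : #|{: E}| = n.
Proof. by rewrite -(bij_eq_card edge_of_bij) card_ord. Qed.

Lemma len_eq : @len 'I_n (@cycle_adj n) = n + n.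
Proof. by rewrite /len card_E card_ord. Qed.

Lemma sum_E (F : E -> nat) : \sum_(e : E) F e = \sum_(k : V) F (edge_of k).
Proof. by rewrite (reindex edge_of) //; exact: onW_bij edge_of_bij. Qed.


Lemma ordS_cases (k : V) :
  (k.+1 < n /\ nat_of_ord (ordS k) = k.+1) \/ (k.+1 = n /\ nat_of_ord (ordS k) = 0).
Proof.
rewrite ordS_val; have := ltn_ord k; case: (ltngtP k.+1 n) => h1 h2.
- by left; rewrite modn_small.
- lia.
- by right; rewrite h1 modnn.
Qed.

Lemma ordS_iter (k : V) m : nat_of_ord (iter m (@ordS n) k) = (k + m) %% n.
Proof.
elim: m => [|m IH] /=; first by rewrite addn0 modn_small.
by rewrite addnS IH -[((k + m) %% n).+1]addn1 modnDml addn1.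
Qed.

End Cyc.

Lemma pos_can (T : finType) (adj : rel T) (x : 'I_(len adj) -> elt adj) y :
  cancel x y -> cancel y x -> forall t, pos x t = (y t).+1.
Proof.
move=> xK yK t; rewrite /pos; case: pickP => [i /eqP <- | H]; first by rewrite xK.
by move: (H (y t)); rewrite yK eqxx.
Qed.

Lemma sum_lt (I : finType) (F G : I -> nat) (j : I) :
  (forall i, F i <= G i) -> F j < G j -> \sum_i F i < \sum_i G i.
Proof.
move=> H Hj; rewrite (bigD1 j) //= [X in _ < X](bigD1 j) //=.
by rewrite -addSn leq_add // leq_sum.
Qed.

Lemma sum_ind_lt m c : \sum_(i < m) (i < c) = minn c m.
Proof.
elim: m => [|m IH]; first by rewrite big_ord0 minn0.
rewrite big_ord_recr /= IH; case: (ltnP m c) => h /=; lia.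
Qed.

Lemma sum_tri m : (\sum_(i < m) (i : nat)) * 2 = m * m.-1.
Proof.
elim: m => [|m IH]; first by rewrite big_ord0.
rewrite big_ord_recr /= mulnDl IH; case: m {IH} => [|m] //=; nia.
Qed.

Lemma sum_odd m : \sum_(i < m) (2 * i - 1) = m.-1 * m.-1.
Proof.
elim: m => [|m IH]; first by rewrite big_ord0.
rewrite big_ord_recr /= IH; case: m {IH} => [|m] //=; nia.
Qed.

Section Lower.
Variable n : nat.
Hypothesis n3 : 2 < n.
Notation V := 'I_n.
Notation E := (@edge 'I_n (@cycle_adj n)).
Notation elt := (@elt 'I_n (@cycle_adj n)).
Notation L := (@len 'I_n (@cycle_adj n)).

Lemma lower (x : 'I_L -> elt) : cseq x -> 6 * n - 4 <= cost x.
Proof.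
case=> [[y xK yK] Hc].
have posE := pos_can xK yK.
have yinj : injective y := can_inj yK.
have Hlt : forall k : V, y (inl k) < y (inr (edge_of k)) /\
                         y (inl (ordS k)) < y (inr (edge_of k)).
  move=> k; have h1 := Hc (edge_of k) k; have h2 := Hc (edge_of k) (ordS k).
  rewrite !posE !ltnS in h1 h2; split; [apply: h1 | apply: h2]; by rewrite /= !inE eqxx ?orbT.
have Hcost : cost x + \sum_(k : V) ((y (inl k) : nat) + y (inl (ordS k)))
             = \sum_(k : V) 2 * y (inr (edge_of k)).
  rewrite /cost (sum_E n3) -big_split /=; apply: eq_bigr => k _.
  rewrite big_setU1 /= ?big_set1; last by rewrite inE (ordS_neq n3).
  rewrite !posE; have [h1 h2] := Hlt k. move: h1 h2; set e := y (inr _); set a := y (inl k); set b := y (inl (ordS k)); lia.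
have HS : \sum_(k : V) (y (inl (ordS k)) : nat) = \sum_(k : V) (y (inl k) : nat).
  by rewrite [RHS](reindex_inj (@ordS_inj n)).
have Htot : (\sum_(v : V) (y (inl v) : nat) + \sum_(e : E) (y (inr e) : nat)) * 2 = L * L.-1.
  have e1 : \sum_(t : elt) (y t : nat) = \sum_(v : V) (y (inl v) : nat) + \sum_(e : E) (y (inr e) : nat)
    := big_sumType _ _ _.
  rewrite -e1 (reindex x) /=; last exact: onW_bij (Bijective xK yK).
  rewrite -sum_tri; congr (_ * 2); apply: eq_bigr => i _; by rewrite xK.
have HE := sum_E n3 (fun e => (y (inr e) : nat)).
pose r v := \sum_(u : V) (y (inl u) < y (inl v)).
have r_lt : forall v, r v < n.
  move=> v; rewrite -[n in _ < n]card_ord -sum1_card.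
  apply: (sum_lt (j := v)) => [u|]; by [case: (_ < _) | rewrite ltnn].
have r_inj : forall u v, r u = r v -> u = v.
  have key : forall u v, y (inl u) < y (inl v) -> r u < r v.
    move=> u v h; apply: (sum_lt (j := u)) => [w|]; last by rewrite ltnn h.
    by case h1: (y (inl w) < y (inl u)) => //=; rewrite (ltn_trans h1 h).
  move=> u v e; case: (ltngtP (y (inl u)) (y (inl v))) => h.
  - by have := key _ _ h; rewrite e ltnn.
  - by have := key _ _ h; rewrite e ltnn.
  - by have /ord_inj /yinj [] := h.
pose R v : V := Ordinal (r_lt v).
have R_inj : injective R by move=> u v /(congr1 (@nat_of_ord n)) /r_inj.
have Yb : forall v, (y (inl v) : nat) <= 2 * r v - 1.
  move=> v.
  pose s := \sum_(k : V) (y (inr (edge_of k)) < y (inl v)).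
  pose a := \sum_(k : V) ((y (inl k) < y (inl v)) && (y (inl (ordS k)) < y (inl v))).
  have HY : (y (inl v) : nat) = r v + s.
    have -> : (y (inl v) : nat) = \sum_(i : 'I_L) (i < y (inl v)).
      by rewrite sum_ind_lt; have := ltn_ord (y (inl v)); lia.
    rewrite (reindex y) /=; last exact: onW_bij (Bijective yK xK).
    by rewrite big_sumType /= (sum_E n3).
  have Hsa : s <= a.
    apply: leq_sum => k _; case h: (y (inr (edge_of k)) < y (inl v)) => //=.
    by have [h1 h2] := Hlt k; rewrite (ltn_trans h1 h) (ltn_trans h2 h).
  have Har : a <= r v by apply: leq_sum => k _; case: (_ < _); case: (_ < _).
  case: (posnP (r v)) => hr; first lia.
  suff : a < r v by lia.
  case: (boolP [exists k, (y (inl k) < y (inl v)) && ~~ (y (inl (ordS k)) < y (inl v))]).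
  - case/existsP => k /andP [h1 h2]; apply: (sum_lt (j := k)).
      by move=> i; case: (_ < _); case: (_ < _).
    by rewrite h1 (negbTE h2).
  - move/existsPn => Hcl; exfalso.
    have [k1 hk1] : exists k1, y (inl k1) < y (inl v).
      case: (boolP [exists k, y (inl k) < y (inl v)]) => [/existsP // | /existsPn Hn].
      have : r v = 0 by rewrite /r big1 // => u _; rewrite (negbTE (Hn u)).
      lia.
    have Hit : forall m, y (inl (iter m (@ordS n) k1)) < y (inl v).
      elim => [|m IH] //=; have := Hcl (iter m (@ordS n) k1); by rewrite IH /= negbK.
    have hv : v = iter (v + n - k1) (@ordS n) k1.
      apply: ord_inj; rewrite ordS_iter.
      have -> : k1 + (v + n - k1) = v + n by have := ltn_ord k1; lia.
      by rewrite modnDr modn_small.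
    by have := Hit (v + n - k1); rewrite -hv ltnn.
have Hv : \sum_(v : V) (y (inl v) : nat) <= n.-1 * n.-1.
  have H1 : \sum_(v : V) (y (inl v) : nat) <= \sum_(v : V) (2 * r v - 1) by apply: leq_sum => v _; exact: Yb.
  apply: leq_trans H1 _.
  have -> : \sum_(v : V) (2 * r v - 1) = \sum_(v : V) (2 * R v - 1) by [].
  have h := reindex_inj (op := addn) (x := 0) (F := fun i : V => 2 * i - 1) (P := fun _ => true) R_inj.
  by rewrite /= in h; rewrite -h sum_odd.
have hl := len_eq n3.
rewrite big_split /= HS -big_distrr /= in Hcost.
rewrite HE in Htot.
move: Hcost Htot Hv hl.
move: (\sum_(k : V) (y (inl k) : nat)) (\sum_(k : V) (y (inr (edge_of k)) : nat)) (cost x).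
move=> A B C h1 h2 h3 h4; rewrite h4 in h2; nia.
Qed.

End Lower.

Ltac ceq := repeat (case: eqP => ?); lia.

Section Upper.
Variable n : nat.
Hypothesis n3 : 2 < n.
Notation V := 'I_n.
Notation E := (@edge 'I_n (@cycle_adj n)).
Notation elt := (@elt 'I_n (@cycle_adj n)).
Notation L := (@len 'I_n (@cycle_adj n)).

Definition fvn (m : nat) := if m == 0 then 0 else 2 * m - 1.
Definition fen (m : nat) := if m == n.-1 then 2 * n - 1 else 2 * m + 2.
Definition f (t : elt) : nat :=
  match t with inl v => fvn v | inr e => fen (edge_inv n3 e) end.

Lemma f_lt t : f t < L.
Proof.
rewrite (len_eq n3); case: t => [v | e] /=.
- have := ltn_ord v; rewrite /fvn; ceq.
- have := ltn_ord (edge_inv n3 e); rewrite /fen; ceq.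
Qed.

Definition yC (t : elt) : 'I_L := Ordinal (f_lt t).

Lemma yC_inj : injective yC.
Proof.
move=> t t' /(congr1 (@nat_of_ord _)) /=.
case: t => [u | e]; case: t' => [v | e'] /=.
- move=> h; congr inl; apply: ord_inj; move: h; have := ltn_ord u; have := ltn_ord v.
  rewrite /fvn; ceq.
- have := ltn_ord u; have := ltn_ord (edge_inv n3 e').
  rewrite /fvn /fen; ceq.
- have := ltn_ord v; have := ltn_ord (edge_inv n3 e).
  rewrite /fvn /fen; ceq.
- move=> h; congr inr; apply: (can_inj (edge_invK n3)); apply: ord_inj; move: h.
  have := ltn_ord (edge_inv n3 e); have := ltn_ord (edge_inv n3 e').
  rewrite /fen; ceq.
Qed.

Definition hc (m : nat) := if m == 0 then 3 else if m == n.-1 then 2 * n + 1 else 4.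

Lemma hc_sum j : j.+1 < n -> \sum_(0 <= i < j.+1) hc i = 4 * j.+1 - 1.
Proof.
elim: j => [|j IH] h; first by rewrite big_nat1.
rewrite big_nat_recr //= IH; last lia.
rewrite /hc; ceq.
Qed.

Lemma hc_total : \sum_(i < n) hc i = 6 * n - 4.
Proof.
rewrite -(big_mkord xpredT hc).
have hn : n = (n - 2).+2 by lia.
rewrite [X in \sum_(0 <= i < X) _]hn big_nat_recr //= hc_sum; last lia.
rewrite /hc; ceq.
Qed.

Lemma upper : exists x : 'I_L -> elt, cseq x /\ cost x = 6 * n - 4.
Proof.
have hc' : #|{: 'I_L}| <= #|{: elt}| by rewrite card_ord card_sum.
case: (inj_card_bij yC_inj hc') => g0 yK gK.
pose g : 'I_L -> elt := g0.
have posE := pos_can (x := g) gK yK.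
exists g; split; [split|].
- exact: Bijective gK yK.
- move=> e u; case: (edge_of_surj e) => k ->.
  have hm := ordS_cases n3 k; rewrite ordS_val in hm.
  rewrite /= !inE => /orP [] /eqP ->; rewrite !posE ltnS /= (edge_ofK n3);
  have := ltn_ord k; move: hm; set m := k.+1 %% n; rewrite /fvn /fen; ceq.
- rewrite /cost (sum_E n3) -hc_total; apply: eq_bigr => k _.
  rewrite big_setU1 /= ?big_set1; last by rewrite inE (ordS_neq n3).
  have hm := ordS_cases n3 k; rewrite ordS_val in hm.
  rewrite !posE /= (edge_ofK n3).
  have := ltn_ord k; move: hm; set m := k.+1 %% n; rewrite /fvn /fen /hc; ceq.
Qed.

End Upper.

Theorem theorem10 (n : nat) : 3 <= n -> @is_nu_star 'I_n (@cycle_adj n) (6 * n - 4).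
Proof.
move=> n3; split; first exact: upper n3.
exact: lower n3.
Qed.
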